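(* Let $K\ge2$, $a,b\ge1$ be integers. For any scheme with uncoded cache placement for the $(K,a,b)$ coded caching problem for location-based content, with load $R$, one has $$R\ \ge\ \frac{K-1}{aK}\,\alpha_0+\frac{1}{bK}\,\beta_0+\frac{K-1}{2aK}\,\alpha_1 .$$
   Context: For integers $x\le y$, $[x:y]=\{x,x+1,\dots,y\}$ and $[n]=[1:n]$. For integers $c$ and $m\ge1$, $\langle c\rangle_m$ denotes the unique element of $\{1,\dots,m\}$ congruent to $c$ modulo $m$. The $(K,a,b)$ coded caching problem for location-based content: a server has $N=K(a+b)$ files $W_1,\dots,W_N$, each consisting of $B$ independent uniformly distributed bits. There are $K$ cache nodes, each storing $MB$ bits, and $K$ users, user $k$ having free access to cache node $k$ only. For $k\in[K]$ define $\mathcal D_{k,1}=[(k-1)(a+b)+1:ka+(k-1)b]$, $\mathcal D_{k,2}=[ka+(k-1)b+1:k(a+b)]$, $\mathcal D_{k,3}=\mathcal D_{\langle k+1\rangle_K,1}$, and $\mathcal D_k=\mathcal D_{k,1}\cup\mathcal D_{k,2}\cup\mathcal D_{k,3}$. A scheme consists of placement $Z_k=\phi_k(W_1,\dots,W_N)\in\{0,1\}^{MB}$ (fixed before demands), for each demand vector $\mathbf d\in\mathcal D_1\times\cdots\times\mathcal D_K$ a broadcast message $X=\psi(\mathbf d,W_1,\dots,W_N)\in\{0,1\}^{RB}$, and decoders such that user $k$ recovers $W_{d_k}$ exactly from $(\mathbf d,Z_k,X)$. The placement is uncoded if each $Z_k$ is a subset of the file bits copied directly. For uncoded placement, for $i\in[N]$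 and $\mathcal T\subseteq[K]$, $W_{i,\mathcal T}$ denotes the set of bits of $W_i$ stored in exactly the cache nodes in $\mathcal T$ (and in no other cache node), and $|W_{i,\mathcal T}|$ its number of bits. Let $\mathcal C_1=\bigcup_{k\in[K]}\mathcal D_{k,1}$, $\mathcal C_2=\bigcup_{k\in[K]}\mathcal D_{k,2}$, and define $\alpha_0=\sum_{i\in\mathcal C_1}|W_{i,\emptyset}|/B$, $\beta_0=\sum_{i\in\mathcal C_2}|W_{i,\emptyset}|/B$, $\alpha_1=\sum_{i\in\mathcal C_1}\sum_{j\in[K]}|W_{i,\{j\}}|/B$. *)

(* Defs.v *)
From HB Require Import structures.
From mathcomp Require Import all_boot all_order all_algebra.
Set Implicit Arguments. Unset Strict Implicit. Unset Printing Implicit Defensive.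
Import Order.TTheory GRing.Theory Num.Theory.

(* All indices below are the paper's 1-based indices (k in [1:K], file i in [1:N]). *)

Definition modOne (c m : nat) : nat := ((c.-1) %% m).+1.

Definition inD1 (a b k i : nat) : bool :=
  ((k.-1) * (a + b) + 1 <= i) && (i <= k * a + (k.-1) * b).
Definition inD2 (a b k i : nat) : bool :=
  (k * a + (k.-1) * b + 1 <= i) && (i <= k * (a + b)).
Definition inD3 (K a b k i : nat) : bool := inD1 a b (modOne k.+1 K) i.
Definition inD (K a b k i : nat) : bool :=
  [|| inD1 a b k i, inD2 a b k i | inD3 K a b k i].

Definition inC1 (K a b i : nat) : bool := [exists k : 'I_K, inD1 a b k.+1 i].
Definition inC2 (K a b i : nat) : bool := [exists k : 'I_K, inD2 a b k.+1 i].

(* Content of cache k under uncoded placement S: the stored bits of the files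
   (positions not stored are filled with the constant [false]; since the
   placement S is fixed and known, this is equivalent to the bit string Z_k). *)
Definition cache (N B K : nat) (S : 'I_K -> {set 'I_N * 'I_B}) (k : 'I_K)
  (W : 'I_N -> 'I_B -> bool) : 'I_N -> 'I_B -> bool :=
  fun i j => if (i, j) \in S k then W i j else false.

Definition Wpart (N B K : nat) (S : 'I_K -> {set 'I_N * 'I_B}) (i : 'I_N)
  (T : {set 'I_K}) : {set 'I_B} :=
  [set j : 'I_B | [set k : 'I_K | (i, j) \in S k] == T].

Local Open Scope ring_scope.

Definition alpha0 (K a b B : nat) (S : 'I_K -> {set 'I_(K * (a + b)) * 'I_B}) : rat :=
  (\sum_(i : 'I_(K * (a + b)) | inC1 K a b i.+1) #|Wpart S i set0|)%N%:R / B%:R.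
Definition beta0 (K a b B : nat) (S : 'I_K -> {set 'I_(K * (a + b)) * 'I_B}) : rat :=
  (\sum_(i : 'I_(K * (a + b)) | inC2 K a b i.+1) #|Wpart S i set0|)%N%:R / B%:R.
Definition alpha1 (K a b B : nat) (S : 'I_K -> {set 'I_(K * (a + b)) * 'I_B}) : rat :=
  (\sum_(i : 'I_(K * (a + b)) | inC1 K a b i.+1)
      \sum_(j : 'I_K) #|Wpart S i [set j]|)%N%:R / B%:R.

(* Main.v *)
Require Import Defs.
From HB Require Import structures.
From mathcomp Require Import all_boot all_order all_algebra.
From mathcomp Require Import zify ring lra.
From Stdlib Require Import FunctionalExtensionality.
Import Order.TTheory GRing.Theory Num.Theory.
Set Implicit Arguments. Unset Strict Implicit. Unset Printing Implicit Defensive.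


Lemma sum_const_ord n c : (\sum_(i < n) c = n * c)%N.
Proof. by rewrite big_const_ord iter_addn_0 mulnC. Qed.

Lemma card_setE (T : finType) (P : pred T) : #|[set x | P x]| = (\sum_x P x)%N.
Proof.
rewrite -sum1dep_card big_mkcond /=; apply: eq_bigr => x _; by case: (P x).
Qed.

Lemma card_sumE (T : finType) (A : {set T}) : #|A| = (\sum_x (x \in A))%N.
Proof.
rewrite -sum1_card big_mkcond /=; apply: eq_bigr => x _; by case: (x \in A).
Qed.

Definition Uset N B K (S : 'I_K -> {set 'I_N * 'I_B}) (d : 'I_K -> 'I_N)
  (pos : 'I_K -> nat) : {set 'I_N * 'I_B} :=
  [set p | [exists u, (d u == p.1) && [forall k, (p \in S k) ==> (pos u < pos k)]]].

Lemma count_U N B K L (S : 'I_K -> {set 'I_N * 'I_B}) (d : 'I_K -> 'I_N)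
  (psi : ('I_N -> 'I_B -> bool) -> L.-tuple bool)
  (dec : 'I_K -> ('I_N -> 'I_B -> bool) -> L.-tuple bool -> 'I_B -> bool)
  (hdec : forall W k j, dec k (cache S k W) (psi W) j = W (d k) j)
  (pos : 'I_K -> nat) : (#|Uset S d pos| <= L)%N.
Proof.
set U := Uset S d pos.
pose f (A : {set 'I_N * 'I_B}) := psi (fun i j => (i,j) \in A).
have inj : {in powerset U &, injective f}.
  move=> A A'; rewrite !powersetE => hA hA' hf.
  have key : forall n p u, d u = p.1 -> (forall k, p \in S k -> (pos u < pos k)%N) ->
      (pos u < n)%N -> (p \in A) = (p \in A').
    elim=> [//|n IH] p u hdu hk hlt.
    have hc : cache S u (fun i j => (i,j) \in A) = cache S u (fun i j => (i,j) \in A').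
      apply: functional_extensionality => i; apply: functional_extensionality => j.
      rewrite /cache; case: ifP => // hin.
      case: (boolP ((i,j) \in U)) => hU.
        move: hU; rewrite inE => /existsP [u' /andP [/eqP hu' /forallP hk']].
        apply: (IH (i,j) u') => //.
          move=> k hk2; exact: (implyP (hk' k) hk2).
        have := implyP (hk' u) hin. lia.
      have h1 : (i,j) \notin A by apply: contra hU; apply: (subsetP hA).
      have h2 : (i,j) \notin A' by apply: contra hU; apply: (subsetP hA').
      by rewrite (negbTE h1) (negbTE h2).
    have e1 := hdec (fun i j => (i,j) \in A) u p.2.
    have e2 := hdec (fun i j => (i,j) \in A') u p.2.
    rewrite hdu -surjective_pairing in e1 e2.
    by rewrite -e1 -e2 hc -/(f A) hf.
  apply/setP => p.
  case: (boolP (p \in U)) => hU.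
    move: (hU); rewrite inE => /existsP [u /andP [/eqP hu /forallP hk]].
    apply: (key (pos u).+1 p u) => // k hk2; exact: (implyP (hk k) hk2).
  have h1 : p \notin A by apply: contra hU; apply: (subsetP hA).
  have h2 : p \notin A' by apply: contra hU; apply: (subsetP hA').
  by rewrite (negbTE h1) (negbTE h2).
have := card_in_imset inj; rewrite card_powerset => e.
have : (#|[set f x | x in powerset U]| <= #|{: L.-tuple bool}|)%N := max_card _.
by rewrite e card_tuple card_bool leq_exp2l.
Qed.


Lemma fC1_proof K a b (g : 'I_K) (s : 'I_a) : (g * (a + b) + s < K * (a + b))%N.
Proof. have := ltn_ord g; have := ltn_ord s. nia. Qed.
Definition fC1 K a b (g : 'I_K) (s : 'I_a) : 'I_(K * (a + b)) := Ordinal (fC1_proof b g s).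
Lemma fC2_proof K a b (g : 'I_K) (r : 'I_b) : (g * (a + b) + a + r < K * (a + b))%N.
Proof. have := ltn_ord g; have := ltn_ord r. nia. Qed.
Definition fC2 K a b (g : 'I_K) (r : 'I_b) : 'I_(K * (a + b)) := Ordinal (fC2_proof a g r).

Definition offK K (k v : 'I_K) : nat := ((v + K - k) %% K)%N.
Definition dA K a b (k : 'I_K) (s : 'I_a) (r : 'I_b) (v : 'I_K) : 'I_(K * (a + b)) :=
  if v == k then fC2 a k r else fC1 b v s.
Definition pA K (k v : 'I_K) : nat := (K - offK k v)%N.
Definition dB K a b (k : 'I_K) (s : 'I_a) (r : 'I_b) (v : 'I_K) : 'I_(K * (a + b)) :=
  if ordS v == k then fC2 a v r else fC1 b (ordS v) s.
Definition pB K (k v : 'I_K) : nat := offK k v.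

Lemma inD1_fC1 K a b (g : 'I_K) (s : 'I_a) : inD1 a b g.+1 (fC1 b g s).+1.
Proof. rewrite /inD1 /= mulSn; have := ltn_ord s; lia. Qed.
Lemma inD2_fC2 K a b (g : 'I_K) (r : 'I_b) : inD2 a b g.+1 (fC2 a g r).+1.
Proof. rewrite /inD2 /= !mulSn; have := ltn_ord r; lia. Qed.

Lemma validA K a b k s r (v : 'I_K) : inD K a b v.+1 (@dA K a b k s r v).+1.
Proof.
rewrite /inD /dA; case: eqP => [->|_].
  by rewrite inD2_fC2 orbT.
by rewrite inD1_fC1.
Qed.
Lemma validB K a b k s r (v : 'I_K) : inD K a b v.+1 (@dB K a b k s r v).+1.
Proof.
rewrite /inD /dB; case: eqP => [_|_].
  by rewrite inD2_fC2 orbT.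
by rewrite /inD3 /modOne /= (inD1_fC1 b (ordS v)) !orbT.
Qed.


Lemma modK K x : (x < 2 * K)%N -> (x %% K = if x < K then x else x - K)%N.
Proof.
move=> h2; case: (ltnP x K) => h1; first by rewrite modn_small.
by rewrite -{1}(subnK h1) modnDr modn_small //; lia.
Qed.

Lemma off_lt K (k v : 'I_K) : (offK k v < K)%N.
Proof. rewrite /offK ltn_pmod //; have := ltn_ord v; lia. Qed.

Lemma off_key K (k g j : 'I_K) : k != g ->
  (offK k j < offK k g)%N \/ (offK k (ord_pred g) < offK k j)%N.
Proof.
move=> hne; have hv : (nat_of_ord k != nat_of_ord g) := hne.
have hj := ltn_ord j; have hg := ltn_ord g; have hk := ltn_ord k.
have hx : ((g + K).-1 %% K = if (g:nat) == 0%N then K.-1 else g.-1)%N.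
  rewrite modK; last lia. case: ifP => ?; case: ifP => ?; lia.
rewrite /offK /= hx.
have hx2 : ((if (g:nat) == 0%N then K.-1 else g.-1) < K)%N by case: ifP => ?; lia.
move: hx2; case: ifP => hg0 hx2;
rewrite (modK (x := (j + K - k)%N)); try lia;
rewrite (modK (x := (g + K - k)%N)); try lia;
rewrite modK; try lia;
repeat case: ifP => ?; lia.
Qed.


Lemma set1_neq0' (T : finType) (j : T) : ([set j] == set0) = false.
Proof. apply/eqP => e; have := set11 j; by rewrite e inE. Qed.


Lemma memA1 K a b B (S : 'I_K -> {set 'I_(K * (a + b)) * 'I_B}) (g k : 'I_K)
  (s : 'I_a) (r : 'I_b) p :
  p.1 = fC1 b g s -> k != g -> (forall k', p \in S k' -> (offK k k' < offK k g)%N) ->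
  p \in Uset S (dA k s r) (pA k).
Proof.
move=> h1 hne hk; rewrite inE; apply/existsP; exists g.
have hne' : g != k by rewrite eq_sym.
rewrite /dA (negbTE hne') h1 eqxx /=; apply/forallP => k'; apply/implyP => h.
rewrite /pA; have := hk k' h; have := off_lt k k'; have := off_lt k g; lia.
Qed.

Lemma memB1 K a b B (S : 'I_K -> {set 'I_(K * (a + b)) * 'I_B}) (g k : 'I_K)
  (s : 'I_a) (r : 'I_b) p :
  p.1 = fC1 b g s -> k != g ->
  (forall k', p \in S k' -> (offK k (ord_pred g) < offK k k')%N) ->
  p \in Uset S (dB k s r) (pB k).
Proof.
move=> h1 hne hk; rewrite inE; apply/existsP; exists (ord_pred g).
have hne' : g != k by rewrite eq_sym.
rewrite /dB ord_predK (negbTE hne') h1 eqxx /=; apply/forallP => k'; apply/implyP => h.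
exact: hk.
Qed.

Lemma memA2 K a b B (S : 'I_K -> {set 'I_(K * (a + b)) * 'I_B}) (g : 'I_K)
  (s : 'I_a) (r : 'I_b) p :
  p.1 = fC2 a g r -> (forall k', p \notin S k') -> p \in Uset S (dA g s r) (pA g).
Proof.
move=> h1 hk; rewrite inE; apply/existsP; exists g.
rewrite /dA eqxx h1 eqxx /=; apply/forallP => k'; apply/implyP => h.
by have := hk k'; rewrite h.
Qed.

Lemma memB2 K a b B (S : 'I_K -> {set 'I_(K * (a + b)) * 'I_B}) (g : 'I_K)
  (s : 'I_a) (r : 'I_b) p :
  p.1 = fC2 a g r -> (forall k', p \notin S k') ->
  p \in Uset S (dB (ordS g) s r) (pB (ordS g)).
Proof.
move=> h1 hk; rewrite inE; apply/existsP; exists g.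
rewrite /dB eqxx h1 eqxx /=; apply/forallP => k'; apply/implyP => h.
by have := hk k'; rewrite h.
Qed.

Lemma sum_drop_s K a b (F : 'I_K -> 'I_a -> 'I_b -> nat) s0 :
  (\sum_k \sum_r F k s0 r <= \sum_k \sum_s \sum_r F k s r)%N.
Proof. apply: leq_sum => k _; rewrite (bigD1 s0) //=; exact: leq_addr. Qed.

Lemma sum_lb_neq K b (G : 'I_K -> 'I_b -> nat) (g : 'I_K) c :
  (forall k r, k != g -> c <= G k r)%N -> (c * (K - 1) * b <= \sum_k \sum_r G k r)%N.
Proof.
move=> h.
have : (\sum_k \sum_(r : 'I_b) (if k != g then c else 0) <= \sum_k \sum_r G k r)%N.
  apply: leq_sum => k _; apply: leq_sum => r _; case: ifP => // hk; exact: h.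
under eq_bigr => k _ do rewrite sum_const_ord.
have e1 : (\sum_(k : 'I_K) b * (if k != g then c else 0) = \sum_(k | k != g) (b * c))%N.
  rewrite (bigD1 g) //= eqxx muln0 add0n; apply: eq_bigr => k hk; by rewrite hk.
have e2 : (\sum_(k : 'I_K) (b * c) = b * c + \sum_(k | k != g) (b * c))%N.
  by rewrite (bigD1 g).
rewrite sum_const_ord in e2.
rewrite e1 => H; apply: leq_trans H.
have : (K * (b * c) - b * c = \sum_(k | k != g) (b * c))%N by rewrite e2; lia.
move <-; rewrite -{2}(mul1n (b * c)) -mulnBl mulnC mulnA (mulnC b) ; lia.
Qed.

Lemma sum_pick K a b (F : 'I_K -> 'I_a -> 'I_b -> nat) k0 r0 :
  (\sum_s F k0 s r0 <= \sum_k \sum_s \sum_r F k s r)%N.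
Proof.
rewrite (bigD1 k0) //=; apply: leq_trans (leq_addr _ _); apply: leq_sum => s _.
rewrite (bigD1 r0) //=; exact: leq_addr.
Qed.

Lemma t3 (k k' i a b: nat) : (k*(a+b) <= i < k*(a+b) + a ->
   k'*(a+b)+a <= i < k'*(a+b)+(a+b) -> False)%N.
Proof. move=> h1 h2. case: (ltngtP k k') => [lt|lt|eq].
 have : (k.+1 * (a+b) <= k' * (a+b))%N by rewrite leq_mul2r lt orbT. rewrite mulSn. lia.
 have : (k'.+1 * (a+b) <= k * (a+b))%N by rewrite leq_mul2r lt orbT. rewrite mulSn. lia.
 subst; lia.
Qed.

Lemma C1_dec K a b (i : 'I_(K * (a + b))) : inC1 K a b i.+1 ->
  exists g (s : 'I_a), i = fC1 b g s.
Proof.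
rewrite /inC1 => /existsP [k hk]; rewrite /inD1 /= mulSn in hk.
have hs : (i - k * (a + b) < a)%N by lia.
exists k, (Ordinal hs); apply: val_inj => /=; lia.
Qed.

Lemma C2_dec K a b (i : 'I_(K * (a + b))) : inC2 K a b i.+1 ->
  exists g (r : 'I_b), i = fC2 a g r.
Proof.
rewrite /inC2 => /existsP [k hk]; rewrite /inD2 /= !mulSn in hk.
have hs : (i - k * (a + b) - a < b)%N by lia.
exists k, (Ordinal hs); apply: val_inj => /=; lia.
Qed.

Lemma C12_excl K a b (i : 'I_(K * (a + b))) : inC1 K a b i.+1 -> inC2 K a b i.+1 = false.
Proof.
rewrite /inC1 /inC2 => /existsP [k hk]; apply/negbTE/negP => /existsP [k' hk'].
rewrite /inD1 /= mulSn in hk; rewrite /inD2 /= !mulSn in hk'.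
apply: (@t3 k k' i a b); lia.
Qed.


Lemma w_le_G K a b B (S : 'I_K -> {set 'I_(K * (a + b)) * 'I_B}) (p : 'I_(K * (a + b)) * 'I_B) :
  (inC1 K a b p.1.+1 * (2 * (K - 1) * b) * ([set k | p \in S k] == set0)
   + inC1 K a b p.1.+1 * ((K - 1) * b) * (\sum_(j : 'I_K) ([set k | p \in S k] == [set j]))
   + inC2 K a b p.1.+1 * (2 * a) * ([set k | p \in S k] == set0)
   <= \sum_(k : 'I_K) \sum_(s : 'I_a) \sum_(r : 'I_b)
        ((p \in Uset S (dA k s r) (pA k)) + (p \in Uset S (dB k s r) (pB k))))%N.
Proof.
set T := [set k | p \in S k].
have hT : forall k, (k \in T) = (p \in S k) by move=> k; rewrite inE.
case h1: (inC1 K a b p.1.+1).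
- rewrite (C12_excl h1) mul0n addn0 !mul1n.
  have [g [s0 hg]] := C1_dec h1.
  case hT0: (T == set0).
  + move/eqP: hT0 => hT0; rewrite hT0 big1 ?muln0 ?addn0; last first.
      by move=> j _; rewrite eq_sym set1_neq0'.
    rewrite muln1.
    have nS : forall k', p \in S k' -> False.
      by move=> k' h; have := hT k'; rewrite hT0 inE h.
    apply: leq_trans (sum_drop_s _ s0).
    apply: (@sum_lb_neq _ _ _ g) => k r hk.
    rewrite (memA1 r hg hk); last by move=> k' /nS.
    rewrite (memB1 r hg hk) //; by move=> k' /nS.
  + rewrite muln0 add0n.
    case: (pickP (fun j => T == [set j])) => [j0 hj0 | hnone]; last first.
      by rewrite big1 ?muln0 // => j _; rewrite hnone.
    move/eqP: hj0 => hj0.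
    rewrite (bigD1 j0) //=.
    rewrite big1; last first.
      move=> j hj; rewrite hj0; case: eqP => // /set1_inj e; by rewrite e eqxx in hj.
    rewrite hj0 eqxx /= addn0 muln1.
    apply: leq_trans (sum_drop_s _ s0).
    rewrite -[((K - 1) * b)%N]mul1n mulnA.
    apply: (@sum_lb_neq _ _ _ g) => k r hk.
    have hS : forall k', p \in S k' -> k' = j0.
      by move=> k' h; move: (hT k'); rewrite h hj0 => /set1P.
    case: (@off_key _ k g j0 hk) => hc.
      by rewrite (memA1 r hg hk) //; move=> k' /hS ->.
    by rewrite (memB1 r hg hk) ?addn1 //; move=> k' /hS ->.
- rewrite !mul0n !add0n.
  case h2: (inC2 K a b p.1.+1); last by rewrite mul0n.
  case hT0: (T == set0); last by rewrite muln0.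
  rewrite mul1n muln1.
  have [g [r0 hg]] := C2_dec h2.
  have nS : forall k', p \notin S k'.
    by move=> k'; apply/negP => h; move/eqP: hT0 => hT0; have := hT k'; rewrite hT0 inE h.
  under eq_bigr => k _ do under eq_bigr => s _ do rewrite big_split /=.
  under eq_bigr => k _ do rewrite big_split /=.
  rewrite big_split /=.
  have ea : (\sum_(s : 'I_a) 1 = a)%N by rewrite sum_const_ord muln1.
  rewrite mul2n -addnn; apply: leq_add.
    apply: leq_trans (sum_pick _ g r0); rewrite -{1}ea; apply: leq_sum => s _.
    by rewrite (memA2 s hg nS).
  apply: leq_trans (sum_pick _ (ordS g) r0); rewrite -{1}ea; apply: leq_sum => s _.
  by rewrite (memB2 s hg nS).
Qed.


Definition wfun K a b B (S : 'I_K -> {set 'I_(K * (a + b)) * 'I_B}) c1 c3 c2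
  (p : 'I_(K * (a + b)) * 'I_B) : nat :=
    (inC1 K a b p.1.+1 * c1 * ([set k | p \in S k] == set0)
   + inC1 K a b p.1.+1 * c3 * (\sum_(j : 'I_K) ([set k | p \in S k] == [set j]))
   + inC2 K a b p.1.+1 * c2 * ([set k | p \in S k] == set0))%N.

Lemma sum_w K a b B (S : 'I_K -> {set 'I_(K * (a + b)) * 'I_B}) c1 c3 c2 :
  (\sum_(p : 'I_(K * (a + b)) * 'I_B) wfun S c1 c3 c2 p
  = c1 * (\sum_(i : 'I_(K * (a + b)) | inC1 K a b i.+1) #|Wpart S i set0|)
  + c3 * (\sum_(i : 'I_(K * (a + b)) | inC1 K a b i.+1) \sum_(j : 'I_K) #|Wpart S i [set j]|)
  + c2 * (\sum_(i : 'I_(K * (a + b)) | inC2 K a b i.+1) #|Wpart S i set0|))%N.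
Proof.
set w := wfun S c1 c3 c2.
have -> : (\sum_p w p = \sum_p (fun i j => w (i, j)) p.1 p.2)%N
  by apply: eq_bigr => -[i j].
rewrite -(pair_bigA _ (fun i j => w (i, j))) /= /w /wfun /=.
under eq_bigr => i _ do rewrite !big_split /= -!big_distrr /=.
rewrite !big_split /=.
congr (_ + _ + _).
- rewrite big_distrr [RHS]big_mkcond /=; apply: eq_bigr => i _.
  rewrite /Wpart card_setE; case: (inC1 K a b i.+1); by rewrite ?mul1n ?mul0n ?muln0 // mulnC.
- rewrite big_distrr [RHS]big_mkcond /=; apply: eq_bigr => i _.
  under [in RHS]eq_bigr => j _ do rewrite /Wpart card_setE.
  rewrite [in RHS]exchange_big /=.
  case: (inC1 K a b i.+1); by rewrite ?mul1n ?mul0n ?muln0 // mulnC.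
- rewrite big_distrr [RHS]big_mkcond /=; apply: eq_bigr => i _.
  rewrite /Wpart card_setE; case: (inC2 K a b i.+1); by rewrite ?mul1n ?mul0n ?muln0 // mulnC.
Qed.


Unset Implicit Arguments.
Local Open Scope ring_scope.

Theorem mainTheorem6 (K a b B MB L : nat)
  (hK : (2 <= K)%N) (ha : (1 <= a)%N) (hb : (1 <= b)%N) (hB : (0 < B)%N)
  (S : 'I_K -> {set 'I_(K * (a + b)) * 'I_B})
  (hcap : forall k, (#|S k| <= MB)%N)
  (psi : ('I_K -> 'I_(K * (a + b))) -> ('I_(K * (a + b)) -> 'I_B -> bool) ->
         L.-tuple bool)
  (dec : ('I_K -> 'I_(K * (a + b))) -> 'I_K ->
         ('I_(K * (a + b)) -> 'I_B -> bool) -> L.-tuple bool -> 'I_B -> bool)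
  (hdec : forall d : 'I_K -> 'I_(K * (a + b)),
      (forall k : 'I_K, inD K a b k.+1 (d k).+1) ->
      forall (W : 'I_(K * (a + b)) -> 'I_B -> bool) (k : 'I_K) (j : 'I_B),
        dec d k (cache S k W) (psi d W) j = W (d k) j) :
  (K - 1)%:R / (a * K)%:R * alpha0 S + 1 / (b * K)%:R * beta0 S
    + (K - 1)%:R / (2 * a * K)%:R * alpha1 S
  <= L%:R / B%:R :> rat.
Proof.
pose UA k s r := Uset S (@dA K a b k s r) (pA k).
pose UB k s r := Uset S (@dB K a b k s r) (pB k).
have hA : forall k s r, (#|UA k s r| <= L)%N.
  move=> k s r; apply: (@count_U _ _ _ _ S (dA k s r) (psi (dA k s r)) (dec (dA k s r))).
  move=> W k' j; exact: (hdec _ (fun v => @validA K a b k s r v) W k' j).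
have hB' : forall k s r, (#|UB k s r| <= L)%N.
  move=> k s r; apply: (@count_U _ _ _ _ S (dB k s r) (psi (dB k s r)) (dec (dB k s r))).
  move=> W k' j; exact: (hdec _ (fun v => @validB K a b k s r v) W k' j).
have up : (\sum_(k : 'I_K) \sum_(s : 'I_a) \sum_(r : 'I_b) (#|UA k s r| + #|UB k s r|)
    <= K * (a * (b * (L + L))))%N.
  rewrite -(sum_const_ord K (a * (b * (L + L)))); apply: leq_sum => k _.
  rewrite -(sum_const_ord a (b * (L + L))); apply: leq_sum => s _.
  rewrite -(sum_const_ord b (L + L)); apply: leq_sum => r _.
  exact: leq_add.
have lo : (\sum_(p : 'I_(K * (a + b)) * 'I_B) wfun S (2 * (K - 1) * b) ((K - 1) * b) (2 * a) p
    <= \sum_(k : 'I_K) \sum_(s : 'I_a) \sum_(r : 'I_b) (#|UA k s r| + #|UB k s r|))%N.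
  have -> : (\sum_(k : 'I_K) \sum_(s : 'I_a) \sum_(r : 'I_b) (#|UA k s r| + #|UB k s r|)
     = \sum_(p : 'I_(K * (a + b)) * 'I_B) \sum_(k : 'I_K) \sum_(s : 'I_a) \sum_(r : 'I_b)
         ((p \in UA k s r) + (p \in UB k s r)))%N.
    under eq_bigr => k _ do under eq_bigr => s _ do under eq_bigr => r _ do
      rewrite !card_sumE -big_split /=.
    under eq_bigr => k _ do under eq_bigr => s _ do rewrite exchange_big /=.
    under eq_bigr => k _ do rewrite exchange_big /=.
    by rewrite exchange_big.
  apply: leq_sum => p _; rewrite /wfun; exact: w_le_G.
rewrite sum_w in lo.
have H := leq_trans lo up.
rewrite /alpha0 /beta0 /alpha1.
set A0 := (\sum_(i : 'I_(K * (a + b)) | inC1 K a b i.+1) #|Wpart S i set0|)%N in H *.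
set A1 := (\sum_(i : 'I_(K * (a + b)) | inC1 K a b i.+1) \sum_(j : 'I_K) #|Wpart S i [set j]|)%N in H *.
set B0 := (\sum_(i : 'I_(K * (a + b)) | inC2 K a b i.+1) #|Wpart S i set0|)%N in H *.
have HQ : ((2 * (K - 1) * b * A0 + (K - 1) * b * A1 + 2 * a * B0)%N%:R
    <= (K * (a * (b * (L + L))))%N%:R :> rat) by rewrite ler_nat.
rewrite !natrD !natrM in HQ.
have haR : a%:R != 0 :> rat by rewrite pnatr_eq0 -lt0n.
have hbR : b%:R != 0 :> rat by rewrite pnatr_eq0 -lt0n.
have hKR : K%:R != 0 :> rat by rewrite pnatr_eq0 -lt0n; lia.
have hBR : B%:R != 0 :> rat by rewrite pnatr_eq0 -lt0n.
have h2R : 2%:R != 0 :> rat by rewrite pnatr_eq0.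
set D := 2%:R * a%:R * b%:R * K%:R * B%:R : rat.
have hD : 0 < D by rewrite /D !mulr_gt0 // ltr0n; lia.
have E1 : (K - 1)%:R / (a * K)%:R * (A0%:R / B%:R) + 1 / (b * K)%:R * (B0%:R / B%:R)
    + (K - 1)%:R / (2 * a * K)%:R * (A1%:R / B%:R)
  = (2%:R * (K - 1)%:R * b%:R * A0%:R + (K - 1)%:R * b%:R * A1%:R + 2%:R * a%:R * B0%:R) / D.
  by rewrite /D !natrM; field; rewrite hBR hKR hbR haR.
have E2 : L%:R / B%:R = (K%:R * (a%:R * (b%:R * (L + L)%:R))) / D :> rat.
  by rewrite /D natrD; field; rewrite hBR hKR hbR haR.
rewrite E1 E2 ler_pM2r; first exact: HQ.
by rewrite invr_gt0.
Qed.
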